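(* Let $f_0$ be a probability density on a sample space $\mathcal{X}$ and let $\mathcal{X}_n=\{x_1,\dots,x_n\}$ be drawn independently from $f_0$. Let $\mathcal{F}$ be the space of densities on $\mathcal{X}$, let $\Pi(\mathcal{X}_n)$ be the (finite) set of sub-partitions of $\mathcal{X}_n$, and let $\psi,\tilde\psi:\mathcal{F}\to\Pi(\mathcal{X}_n)$ be maps (possibly depending on $\mathcal{X}_n$ and $n$). Let $P_M(\cdot\mid\mathcal{X}_n)$ be the posterior distribution of $f\in\mathcal{F}$ under a Bayesian model $M$, and let $$\hat{\mathbf{C}}\in\operatorname*{argmin}_{\mathbf{C}\in\Pi(\mathcal{X}_n)} E_{f\sim P_M(\cdot\mid\mathcal{X}_n)}\big[D\{\tilde\psi(f),\mathbf{C}\}\big].$$ Assume: (A1) $D:\Pi(\mathcal{X}_n)\times\Pi(\mathcal{X}_n)\to[0,1]$ is a metric; (A2) there is a metric $\rho$ on $\mathcal{F}$ and a non-negative sequence $\epsilon_n\to 0$ such that for every non-negative sequence $K_n\to\infty$, $P_M\big(f:\rho(f,f_0)\ge \epsilon_n K_n\mid\mathcal{X}_n\big)\to 0$ in probability as $n\to\infty$; (A3) there is a non-negative sequence $K_n\to\infty$ such that $\tau_2(\mathcal{X}_n):=\sup_{f\in\mathcal{F}:\rho(f,f_0)\le K_n\epsilon_n} D\{\tilde\psi(f),\psi(f_0)\}\to 0$ in probability as $n\to\infty$, with $\rho,\epsilon_n$ as in (A2). Let $\tau_1(\mathcal{X}_n):=P_M\big(f:\rho(f,f_0)\ge \epsilon_n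 K_n\mid\mathcal{X}_n\big)$ with $K_n$ the sequence from (A3). Then $$0\le D\{\hat{\mathbf{C}},\psi(f_0)\}\le 2\tau_1(\mathcal{X}_n)+2\tau_2(\mathcal{X}_n)\to 0\quad\text{in probability as } n\to\infty.$$
   Context: A sub-partition of a finite set $\mathcal{X}_n$ is a collection $\{C_1,\dots,C_k\}$ ($k\ge 0$) of non-empty, pairwise disjoint subsets of $\mathcal{X}_n$ (their union may be a proper subset of $\mathcal{X}_n$; points not in the union are called noise/inactive points). Convergence in probability of random variables $X_n\to 0$ means $\Pr(|X_n|>\epsilon)\to 0$ for every fixed $\epsilon>0$. *)

(* Defs.v *)
From HB Require Import structures.
From mathcomp Require Import all_boot all_order all_algebra.
From mathcomp Require Import all_classical all_reals all_analysis.
Set Implicit Arguments. Unset Strict Implicit. Unset Printing Implicit Defensive.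
Import Order.TTheory GRing.Theory Num.Theory.
Local Open Scope classical_set_scope.
Local Open Scope ring_scope.

(* Sub-partitions of the (indexed) sample {x_0,...,x_{n-1}}: collections of
   non-empty pairwise disjoint blocks of indices (noise points allowed). *)
Definition is_subpart (n : nat) (C : {set {set 'I_n}}) : bool :=
  finset.trivIset C && (finset.set0 \notin C).

Definition subpart (n : nat) := {C : {set {set 'I_n}} | is_subpart C}.

Definition is_metric01 {R : realType} {T : Type} (D : T -> T -> R) : Prop :=
  [/\ forall a b, 0 <= D a b <= 1,
      forall a b, D a b = 0 <-> a = b,
      forall a b, D a b = D b a &
      forall a b c, D a c <= D a b + D b c].

Definition is_metric {R : realType} {T : Type} (rho : T -> T -> R) : Prop :=
  [/\ forall a b, 0 <= rho a b,
      forall a b, rho a b = 0 <-> a = b,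
      forall a b, rho a b = rho b a &
      forall a b c, rho a c <= rho a b + rho b c].

Definition is_density {R : realType} {dX} {X : measurableType dX}
  (mu : {measure set X -> \bar R}) (g : X -> R) : Prop :=
  [/\ forall x, 0 <= g x, measurable_fun setT g &
      (\int[mu]_x (g x)%:E = 1)%E].

Definition iid_density {R : realType} {dO dX} {O : measurableType dO}
  {X : measurableType dX} (P : probability O R)
  (mu : {measure set X -> \bar R}) (g : X -> R) (xs : nat -> O -> X) : Prop :=
  [/\ forall i, measurable_fun setT (xs i),
      forall i A, measurable A ->
        P (xs i @^-1` A) = (\int[mu]_(x in A) (g x)%:E)%E &
      forall (s : seq nat) (A : nat -> set X), uniq s ->
        (forall i, measurable (A i)) ->
        P (\big[setI/setT]_(i <- s) (xs i @^-1` A i)) =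
        (\prod_(i <- s) P (xs i @^-1` A i))%E].

Definition cvg_in_prob0 {R : realType} {dO} {O : measurableType dO}
  (P : probability O R) (Y : nat -> O -> R) : Prop :=
  (forall n, measurable_fun setT (Y n)) /\
  forall e : R, 0 < e ->
    P [set w | e < `|Y n w|] @[n --> \oo] --> 0%E.

(* Main.v *)
Require Import Defs.
From HB Require Import structures.
From mathcomp Require Import all_boot all_order all_algebra.
From mathcomp Require Import all_classical all_reals all_analysis.
From mathcomp Require Import lra.
Import Order.TTheory GRing.Theory Num.Theory.
Local Open Scope classical_set_scope.
Local Open Scope ring_scope.

Lemma bound_lemma (R : realType) (dF : measure_display) (F : measurableType dF)
  (mu : probability F R) (T : Type) (D : T -> T -> R) (HD : is_metric01 D)
  (g : F -> T) (c a : T) (A : set F) (mA : measurable A) (t2 : R)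
  (mg : forall C, measurable_fun setT (fun f => D (g f) C))
  (Hmin : (\int[mu]_f (D (g f) c)%:E <= \int[mu]_f (D (g f) a)%:E)%E)
  (Ht2 : forall f, ~ A f -> D (g f) a <= t2) (t2ge0 : 0 <= t2) :
  D c a <= 2 * fine (mu A) + 2 * t2.
Proof.
case: HD => H01 Heq Hsym Htri.
have P1 : mu setT = 1%E by apply: probability_setT.
have D0 x y : (0 <= (D x y)%:E)%E by rewrite lee_fin; case/andP: (H01 x y).
have muA : mu A = (fine (mu A))%:E by rewrite fineK // fin_num_measure.
have step1 : ((D c a)%:E <= \int[mu]_f ((D (g f) c)%:E + (D (g f) a)%:E))%E.
  have -> : (D c a)%:E = (\int[mu]_(f in setT) (cst (D c a)%:E) f)%E.
    by rewrite integral_cst // (_ : _ [set: _] = 1%E) ?mule1 //; apply: probability_setT.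
  apply: ge0_le_integral => //; first by move=> *; exact: D0.
    by apply: emeasurable_funD; apply/measurable_realfun.measurable_EFinP; apply: mg.
  move=> f _ /=; rewrite -EFinD lee_fin.
  by rewrite (Hsym (g f) c); apply: Htri.
have step2 : (\int[mu]_f (D (g f) a)%:E <= \int[mu]_f ((\1_A f)%:E + (cst t2%:E) f))%E.
  apply: ge0_le_integral => //.
    by apply/measurable_realfun.measurable_EFinP; apply: mg.
    apply: emeasurable_funD; last exact: measurable_cst.
    by apply/measurable_realfun.measurable_EFinP; exact: measurable_realfun.measurable_indic.
  move=> f _ /=; rewrite -EFinD lee_fin.
  have [Af|nAf] := pselect (A f).
    rewrite indicE mem_set // ; case/andP: (H01 (g f) a) => _ h1.
    by rewrite -[D _ _]addr0 lerD.
  rewrite indicE memNset // add0r; exact: Ht2.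
have step3 : (\int[mu]_f ((\1_A f)%:E + (cst t2%:E) f) = mu A + t2%:E)%E.
  rewrite ge0_integralD //.
  - by rewrite integral_indic // setIT integral_cst // (_ : _ [set: _] = 1%E) ?mule1 //; apply: probability_setT.
  by apply/measurable_realfun.measurable_EFinP; exact: measurable_realfun.measurable_indic.
move: step1; rewrite ge0_integralD //; last 2 first.
  - by apply/measurable_realfun.measurable_EFinP; apply: mg.
  - by apply/measurable_realfun.measurable_EFinP; apply: mg.
move=> step1.
have := le_trans step1 (leeD Hmin (lexx _)).
move=> /le_trans /(_ (leeD step2 step2)).
rewrite step3 muA -!EFinD lee_fin.
lra.
Qed.

Lemma meas_gt (d : measure_display) (T : measurableType d) (R : realType)
  (Y : T -> R) (mY : measurable_fun setT Y) (e : R) :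
  measurable [set w | e < `|Y w|].
Proof.
have := measurableT_comp (@measurable_realfun.normr_measurable R setT) mY measurableT
  (measurable_itv `]e, +oo[).
rewrite setTI; congr measurable; apply/seteqP; split => w /=;
  by rewrite in_itv /= andbT.
Qed.

Lemma meas_ge (d : measure_display) (T : measurableType d) (R : realType)
  (Y : T -> R) (mY : measurable_fun setT Y) (e : R) :
  measurable [set w | e <= Y w].
Proof.
have := mY measurableT _ (measurable_itv `[e, +oo[).
rewrite setTI; congr measurable; apply/seteqP; split => w /=;
  by rewrite in_itv /= andbT.
Qed.

Theorem theorem1
  (R : realType)
  (dO : measure_display) (Omega : measurableType dO) (P : probability Omega R)
  (dX : measure_display) (X : measurableType dX) (mu : {measure set X -> \bar R})
  (dF : measure_display) (F : measurableType dF) (dens : F -> X -> R)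
  (dens_inj : injective dens)
  (dens_range : range dens = [set g | is_density mu g])
  (f0 : F) (xs : nat -> Omega -> X)
  (Hiid : iid_density P mu (dens f0) xs)
  (post : nat -> Omega -> probability F R)
  (psi psit : forall n : nat, Omega -> F -> subpart n)
  (D : forall n : nat, Omega -> subpart n -> subpart n -> R)
  (Chat : forall n : nat, Omega -> subpart n)
  (Hmeas_loss : forall n w C,
      measurable_fun setT (fun f => D n w (psit n w f) C))
  (Hargmin : forall n w (C : subpart n),
      (\int[post n w]_f (D n w (psit n w f) (Chat n w))%:E <=
       \int[post n w]_f (D n w (psit n w f) C)%:E)%E)
  (A1 : forall n w, is_metric01 (D n w))
  (rho : F -> F -> R) (eps : nat -> R)
  (Hrho : is_metric rho)
  (Hrho_meas : measurable_fun setT (fun f => rho f f0))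
  (eps_ge0 : forall n, 0 <= eps n)
  (eps_cvg : eps n @[n --> \oo] --> 0)
  (A2 : forall K' : nat -> R, (forall n, 0 <= K' n) ->
      K' n @[n --> \oo] --> +oo ->
      cvg_in_prob0 P
        (fun n w => fine (post n w [set f | eps n * K' n <= rho f f0])))
  (K : nat -> R) (K_ge0 : forall n, 0 <= K n)
  (K_cvg : K n @[n --> \oo] --> +oo)
  (A3 : cvg_in_prob0 P
      (fun n w => sup [set D n w (psit n w f) (psi n w f0)
                      | f in [set f | rho f f0 <= K n * eps n]])) :
  let tau1 := fun n w => fine (post n w [set f | eps n * K n <= rho f f0]) in
  let tau2 := fun n w => sup [set D n w (psit n w f) (psi n w f0)
                             | f in [set f | rho f f0 <= K n * eps n]] in
  (forall n w, 0 <= D n w (Chat n w) (psi n w f0) <= 2 * tau1 n w + 2 * tau2 n w)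
  /\ cvg_in_prob0 P (fun n w => 2 * tau1 n w + 2 * tau2 n w).
Proof.
move=> tau1 tau2.
have ub2 : forall n w, has_ubound [set D n w (psit n w f) (psi n w f0)
                      | f in [set f | rho f f0 <= K n * eps n]].
  move=> n w; exists 1 => _ [f _ <-]; by case: (A1 n w) => H _ _ _; case/andP: (H (psit n w f) (psi n w f0)).
have tau2_ge0 : forall n w, 0 <= tau2 n w.
  move=> n w; rewrite /tau2.
  set S := [set _ | _ in _].
  have [->|/set0P [x Sx]] := eqVneq S set0; first by rewrite sup0.
  apply: (le_trans _ (ub_le_sup (ub2 n w) Sx)).
  case: Sx => f _ <-; by case: (A1 n w) => H _ _ _; case/andP: (H (psit n w f) (psi n w f0)).
split.
  move=> n w; apply/andP; split.
    by case: (A1 n w) => H _ _ _; case/andP: (H (Chat n w) (psi n w f0)).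
  apply: (@bound_lemma _ _ _ _ _ _ (A1 n w) (psit n w)).
  - exact: meas_ge.
  - exact: Hmeas_loss.
  - exact: Hargmin.
  - move=> f /negP; rewrite -ltNge => hf.
    apply: ub_le_sup; first exact: ub2.
    by exists f => //=; rewrite mulrC ltW.
  - exact: tau2_ge0.
have [m1 c1] := A2 K K_ge0 K_cvg.
have [m2 c2] := A3.
have mS : forall n, measurable_fun setT (fun w => 2 * tau1 n w + 2 * tau2 n w).
  move=> n; apply: measurable_realfun.measurable_funD.
    have := @measurable_realfun.measurable_funM _ _ _ setT (fun _ => 2) (tau1 n) (measurable_cst _) (m1 n). exact.
  have := @measurable_realfun.measurable_funM _ _ _ setT (fun _ => 2) (tau2 n) (measurable_cst _) (m2 n). exact.
split => // e e0.
have e4 : 0 < e / 4 by rewrite divr_gt0.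
apply: (@squeeze_cvge _ _ _ _ (cst 0%E) _
  (fun n => P [set w | (e / 4 < `|tau1 n w|)%R] + P [set w | (e / 4 < `|tau2 n w|)%R])%E).
- apply: nearW => n; apply/andP; split; first exact: measure_ge0.
  apply: (le_trans _ (measureU2 P (@meas_gt _ _ _ _ (m1 n) (e / 4)) (@meas_gt _ _ _ _ (m2 n) (e / 4)))).
  apply: le_measure; rewrite ?inE.
  + exact: (@meas_gt _ _ _ _ (mS n)).
  + by apply: measurableU; [exact: (@meas_gt _ _ _ _ (m1 n))|exact: (@meas_gt _ _ _ _ (m2 n))].
  move=> w /= H.
  case: (ltP (e / 4) `|tau1 n w|) => ha; first by left.
  case: (ltP (e / 4) `|tau2 n w|) => hb; first by right.
  exfalso; have := ler_normD (2 * tau1 n w) (2 * tau2 n w).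
  rewrite !normrM normr_nat; lra.
- exact: cvg_cst.
- rewrite -[0%E]adde0; apply: cvgeD => //.
  + exact: c1.
  + exact: c2.
Qed.
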